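(* Let $F$ be a non-archimedean local field of characteristic not $2$ with valuation ring $\mathfrak{o}$, $V$ a $2$-dimensional $F$-vector space, and $\ddagger$ an orthogonal involution on $End(V)$ with associated bilinear form $b_\ddagger$. For lattices $\Lambda_1,\Lambda_2\subset V$ let $\mathcal{O}_i=End(\Lambda_i)\cap End(\Lambda_i^\sharp)$. Then $\mathcal{O}_1=\mathcal{O}_2$ if and only if $\Lambda_1=\lambda\Lambda_2$ or $\Lambda_1=\lambda\Lambda_2^\sharp$ for some $\lambda\in F^\times$.
   Context: $b_\ddagger$ is a nondegenerate symmetric bilinear form on $V$ (unique up to scaling) with $b_\ddagger(v,\sigma w)=b_\ddagger(\sigma^\ddagger v,w)$ for all $v,w\in V,\sigma\in End(V)$. A lattice is a finitely generated $\mathfrak{o}$-submodule spanning $V$; $\Lambda^\sharp=\{v\in V:b_\ddagger(v,\Lambda)\subset\mathfrak{o}\}$; $End(\Lambda)=\{\sigma:\sigma\Lambda\subset\Lambda\}$. *)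

(* Defs.v *)
From mathcomp Require Import all_boot all_order all_algebra.
Set Implicit Arguments. Unset Strict Implicit. Unset Printing Implicit Defensive.
Import Order.TTheory GRing.Theory Num.Theory.
Local Open Scope ring_scope.

(* A discrete valuation v : F -> int (its value at 0 is irrelevant; 0 has
   valuation +oo by convention, handled by the disjunctions "x = 0 \/ ..."). *)
Definition vge (F : fieldType) (v : F -> int) (x : F) (k : int) : Prop :=
  x = 0 \/ k <= v x.

Definition vring (F : fieldType) (v : F -> int) (x : F) : Prop := vge v x 0.

Record is_nonarch_local_field (F : fieldType) (v : F -> int) : Prop := {
  lf_mul : forall x y : F, x != 0 -> y != 0 -> v (x * y) = v x + v y;
  lf_add : forall x y : F, x != 0 -> y != 0 -> vge v (x + y) (Num.min (v x) (v y));
  lf_unif : exists pi : F, pi != 0 /\ v pi = 1;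
  lf_complete : forall u : nat -> F,
      (forall k : int, exists N, forall m n, (N <= m)%N -> (N <= n)%N ->
          vge v (u m - u n) k) ->
      exists l : F, forall k : int, exists N, forall n, (N <= n)%N -> vge v (u n - l) k;
  lf_residue_finite : exists s : seq F, (forall r, r \in s -> vring v r) /\
      forall x, vring v x -> exists2 r, r \in s & vge v (x - r) 1
}.

(* V = F^2 as column vectors, End(V) = 2x2 matrices. *)
Definition bform (F : fieldType) (B : 'M[F]_2) (x y : 'cV[F]_2) : F :=
  (x^T *m B *m y) 0 0.

Definition orth_involution_with_form (F : fieldType)
    (dag : 'M[F]_2 -> 'M[F]_2) (B : 'M[F]_2) : Prop :=
  [/\ (forall a (s t : 'M[F]_2), dag (a *: s + t) = a *: dag s + dag t),
      (forall s t : 'M[F]_2, dag (s *m t) = dag t *m dag s),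
      (forall s : 'M[F]_2, dag (dag s) = s),
      B^T = B /\ B \in unitmx &
      (forall (s : 'M[F]_2) (x y : 'cV[F]_2), bform B x (s *m y) = bform B (dag s *m x) y)].

Definition is_lattice (F : fieldType) (v : F -> int) (L : 'cV[F]_2 -> Prop) : Prop :=
  exists s : seq 'cV[F]_2,
    (forall x, L x <-> exists a : 'I_(size s) -> F,
        (forall i, vring v (a i)) /\ x = \sum_(i < size s) a i *: s`_i) /\
    (forall x : 'cV[F]_2, exists a : 'I_(size s) -> F, x = \sum_(i < size s) a i *: s`_i).

Definition dual_lattice (F : fieldType) (v : F -> int) (B : 'M[F]_2)
    (L : 'cV[F]_2 -> Prop) : 'cV[F]_2 -> Prop :=
  fun x => forall y, L y -> vring v (bform B x y).

Definition End_lat (F : fieldType) (L : 'cV[F]_2 -> Prop) : 'M[F]_2 -> Prop :=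
  fun s => forall x, L x -> L (s *m x).

Definition order_of (F : fieldType) (v : F -> int) (B : 'M[F]_2)
    (L : 'cV[F]_2 -> Prop) : 'M[F]_2 -> Prop :=
  fun s => End_lat L s /\ End_lat (dual_lattice v B L) s.

Definition scale_lat (F : fieldType) (l : F) (L : 'cV[F]_2 -> Prop) : 'cV[F]_2 -> Prop :=
  fun x => exists2 y, L y & x = l *: y.

(* Main.v *)
Require Import Defs.
From mathcomp Require Import all_boot all_order all_algebra.
From mathcomp Require Import ring lra zify.
Set Implicit Arguments. Unset Strict Implicit. Unset Printing Implicit Defensive.
Import Order.TTheory GRing.Theory Num.Theory.
Local Open Scope ring_scope.

Section Val.
Variables (F : fieldType) (v : F -> int).
Hypothesis hF : is_nonarch_local_field v.
Local Notation o := (vring v).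

Lemma v1 : v 1 = 0.
Proof. have := lf_mul hF (oner_neq0 F) (oner_neq0 F). rewrite mulr1; set a := v 1 => h. lia. Qed.

Lemma vN1 : v (-1) = 0.
Proof.
have h1 : (-1 : F) != 0 by rewrite oppr_eq0 oner_neq0.
have := lf_mul hF h1 h1. rewrite mulrNN mulr1 v1; set a := v (-1) => h. lia.
Qed.

Lemma vV x : x != 0 -> v x^-1 = - v x.
Proof.
move=> hx. have hx' : x^-1 != 0 by rewrite invr_eq0.
have := lf_mul hF hx hx'. rewrite mulfV // v1; set a := v x^-1 => h. lia.
Qed.

Lemma o0 : o 0. Proof. by rewrite /vring /vge; left. Qed.
Lemma o1 : o 1. Proof. by rewrite /vring /vge; right; rewrite v1. Qed.

Lemma oD x y : o x -> o y -> o (x + y).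
Proof.
rewrite /vring /vge.
case=> [->|hx]; first by rewrite add0r.
case=> [->|hy]; first by rewrite addr0; right.
case: (eqVneq x 0) => [->|x0]; first by rewrite add0r; right.
case: (eqVneq y 0) => [->|y0]; first by rewrite addr0; right.
case: (lf_add hF x0 y0) => [->|h]; first by left.
right; apply: le_trans _ h; rewrite le_min hx hy //.
Qed.

Lemma oM x y : o x -> o y -> o (x * y).
Proof.
rewrite /vring /vge.
case=> [->|hx]; first by rewrite mul0r; left.
case=> [->|hy]; first by rewrite mulr0; left.
case: (eqVneq x 0) => [->|x0]; first by rewrite mul0r; left.
case: (eqVneq y 0) => [->|y0]; first by rewrite mulr0; left.
right; rewrite (lf_mul hF x0 y0). move: hx hy; set a := v x; set b := v y. lia.
Qed.

Lemma oN x : o x -> o (- x).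
Proof.
move=> hx; rewrite -mulN1r; apply: oM => //; rewrite /vring /vge; right; rewrite vN1 //.
Qed.

Lemma oB x y : o x -> o y -> o (x - y).
Proof. by move=> hx hy; apply: oD => //; apply: oN. Qed.

Lemma o_sum (I : Type) (r : seq I) (P : pred I) (f : I -> F) :
  (forall i, P i -> o (f i)) -> o (\sum_(i <- r | P i) f i).
Proof. move=> h; apply: (big_ind o) => //; [exact: o0 | exact: oD]. Qed.

Lemma o_nat (n : nat) : o n%:R.
Proof. elim: n => [|n ih]; first exact: o0. by rewrite -addn1 natrD; apply: oD => //; exact: o1. Qed.

Definition dv (x y : F) := x != 0 /\ o (y / x).

Lemma dv_tot x y : x != 0 -> y != 0 -> o (y / x) \/ o (x / y).
Proof.
move=> x0 y0.
have hyx : v (y / x) = v y - v x by rewrite (lf_mul hF y0) ?invr_eq0 // vV.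
have hxy : v (x / y) = v x - v y by rewrite (lf_mul hF x0) ?invr_eq0 // vV.
move: hyx hxy; set a := v (y / x); set b := v (x / y); set c := v x; set d := v y => hyx hxy.
rewrite /vring /vge; case: (lerP c d) => h; [left; right | right; right]; lia.
Qed.

Lemma o_divM x y z : y != 0 -> o (z / y) -> o (y / x) -> o (z / x).
Proof.
move=> y0 h1 h2; have -> : z / x = (z / y) * (y / x) by rewrite mulrA divfK.
exact: oM.
Qed.

Lemma exists_pivot (s : seq F) : has (fun x => x != 0) s ->
  exists2 z, z \in s & forall y, y \in s -> dv z y.
Proof.
elim: s => [//|x s ih] /=.
case: (boolP (has (fun x => x != 0) s)) => hs.
- case: (ih hs) => z zs hz.
  have z0 : z != 0 by case: (hz z zs).
  case: (eqVneq x 0) => [x0|x0] _.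
  + exists z; first by rewrite inE zs orbT.
    move=> y; rewrite inE => /orP [/eqP ->|ys]; last exact: hz.
    by rewrite x0; split => //; rewrite mul0r; exact: o0.
  + case: (dv_tot x0 z0) => h.
    * exists x; first by rewrite inE eqxx.
      move=> y; rewrite inE => /orP [/eqP ->|ys].
      - by split => //; rewrite mulfV //; exact: o1.
      - split => //; apply: (@o_divM _ z) => //. by case: (hz y ys).
    * exists z; first by rewrite inE zs orbT.
      move=> y; rewrite inE => /orP [/eqP ->|ys]; last exact: hz.
      by rewrite /dv; split.
- rewrite orbF => x0; exists x; first by rewrite inE eqxx.
  move=> y; rewrite inE => /orP [/eqP ->|ys].
  + by split => //; rewrite mulfV //; exact: o1.
  + have : y == 0 by move: hs => /hasPn /(_ y ys); rewrite negbK.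
    by move/eqP => ->; split => //; rewrite mul0r; exact: o0.
Qed.


Definition mx22 (a b c d : F) : 'M[F]_2 :=
  \matrix_(i, j) if (i : nat) == 0%N then (if (j : nat) == 0%N then a else b)
                 else (if (j : nat) == 0%N then c else d).
Definition cv2 (x y : F) : 'cV[F]_2 := \col_i (if (i : nat) == 0%N then x else y).

Lemma mx22_eta (M : 'M[F]_2) : M = mx22 (M 0 0) (M 0 1) (M 1 0) (M 1 1).
Proof.
apply/matrixP => i j; rewrite mxE.
by case: i => [[|[|//]]] Hi; case: j => [[|[|//]]] Hj /=; congr (M _ _); apply: val_inj.
Qed.

Lemma cv2_eta (x : 'cV[F]_2) : x = cv2 (x 0 0) (x 1 0).
Proof.
apply/matrixP => i j; rewrite mxE (ord1 j).
by case: i => [[|[|//]]] Hi /=; congr (x _ _); apply: val_inj.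
Qed.

Lemma mx22_inj a b c d a' b' c' d' :
  mx22 a b c d = mx22 a' b' c' d' -> [/\ a = a', b = b', c = c' & d = d'].
Proof.
move=> h; have e := congr1 (fun M : 'M[F]_2 => (M 0 0, M 0 1, M 1 0, M 1 1)) h.
by move: e; rewrite /= !mxE /= => [[-> -> -> ->]].
Qed.

Lemma mx22E a b c d :
  [/\ mx22 a b c d 0 0 = a, mx22 a b c d 0 1 = b, mx22 a b c d 1 0 = c & mx22 a b c d 1 1 = d].
Proof. by rewrite !mxE. Qed.

Lemma cv2E x y : cv2 x y 0 0 = x /\ cv2 x y 1 0 = y.
Proof. by rewrite !mxE. Qed.

Lemma mulmx22 a b c d a' b' c' d' :
  mx22 a b c d *m mx22 a' b' c' d' =
  mx22 (a * a' + b * c') (a * b' + b * d') (c * a' + d * c') (c * b' + d * d').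
Proof.
apply/matrixP => i j; rewrite !mxE !big_ord_recl big_ord0 !mxE /=.
by case: i => [[|[|//]]] Hi; case: j => [[|[|//]]] Hj /=; rewrite addr0.
Qed.

Lemma mulmx22v a b c d x y :
  mx22 a b c d *m cv2 x y = cv2 (a * x + b * y) (c * x + d * y).
Proof.
apply/matrixP => i j; rewrite !mxE !big_ord_recl big_ord0 !mxE /=.
by case: i => [[|[|//]]] Hi /=; rewrite addr0.
Qed.

Lemma scalemx22 k a b c d : k *: mx22 a b c d = mx22 (k * a) (k * b) (k * c) (k * d).
Proof.
apply/matrixP => i j; rewrite !mxE.
by case: i => [[|[|//]]] Hi; case: j => [[|[|//]]] Hj.
Qed.

Lemma scalecv2 k x y : k *: cv2 x y = cv2 (k * x) (k * y).
Proof. apply/matrixP => i j; rewrite !mxE. by case: i => [[|[|//]]] Hi. Qed.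

Lemma addcv2 x y x' y' : cv2 x y + cv2 x' y' = cv2 (x + x') (y + y').
Proof. apply/matrixP => i j; rewrite !mxE. by case: i => [[|[|//]]] Hi. Qed.

Lemma mx22_1 : (1%:M : 'M[F]_2) = mx22 1 0 0 1.
Proof.
apply/matrixP => i j; rewrite !mxE.
by case: i => [[|[|//]]] Hi; case: j => [[|[|//]]] Hj.
Qed.

Lemma trmx22 a b c d : (mx22 a b c d)^T = mx22 a c b d.
Proof.
apply/matrixP => i j; rewrite !mxE.
by case: i => [[|[|//]]] Hi; case: j => [[|[|//]]] Hj.
Qed.

Definition intmx m n (M : 'M[F]_(m, n)) := forall i j, o (M i j).

Lemma intmx22 a b c d : intmx (mx22 a b c d) <-> [/\ o a, o b, o c & o d].
Proof.
split.
- by move=> h; have := h 0 0; have := h 0 1; have := h 1 0; have := h 1 1; rewrite !mxE.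
- case=> ha hb hc hd i j; rewrite mxE.
  by case: i => [[|[|//]]] Hi; case: j => [[|[|//]]] Hj.
Qed.

Lemma intcv2 x y : intmx (cv2 x y) <-> o x /\ o y.
Proof.
split.
- by move=> h; have := h 0 0; have := h 1 0; rewrite !mxE.
- case=> hx hy i j; rewrite mxE.
  by case: i => [[|[|//]]] Hi.
Qed.

Lemma intmxM m n p (A : 'M[F]_(m, n)) (B : 'M[F]_(n, p)) :
  intmx A -> intmx B -> intmx (A *m B).
Proof. move=> hA hB i j; rewrite mxE; apply: o_sum => k _; exact: oM. Qed.

Lemma intmxD m n (A B : 'M[F]_(m, n)) : intmx A -> intmx B -> intmx (A + B).
Proof. move=> hA hB i j; rewrite mxE; exact: oD. Qed.

Lemma intmxZ m n c (A : 'M[F]_(m, n)) : o c -> intmx A -> intmx (c *: A).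
Proof. move=> hc hA i j; rewrite mxE; exact: oM. Qed.

Lemma intmx_tr m n (A : 'M[F]_(m, n)) : intmx A -> intmx A^T.
Proof. by move=> h i j; rewrite mxE. Qed.

Lemma intmx1 : intmx (1%:M : 'M[F]_2).
Proof. rewrite mx22_1; apply/intmx22; split; (exact: o0 || exact: o1). Qed.

Definition lat (R : 'M[F]_2) : 'cV[F]_2 -> Prop :=
  fun x => exists a, intmx a /\ x = R *m a.

Lemma invmxM (A C : 'M[F]_2) : A \in unitmx -> C \in unitmx ->
  invmx (A *m C) = invmx C *m invmx A.
Proof.
move=> hA hC.
have hAC : A *m C \in unitmx by rewrite unitmx_mul hA hC.
have e : invmx C *m invmx A *m (A *m C) = 1%:M.
  by rewrite mulmxA -(mulmxA _ (invmx A)) mulVmx // mulmx1 mulVmx.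
by rewrite -[LHS]mul1mx -e -mulmxA mulmxV // mulmx1.
Qed.

Lemma latE R x : R \in unitmx -> lat R x <-> intmx (invmx R *m x).
Proof.
move=> hR; split.
- by case=> a [ha ->]; rewrite mulKmx.
- by move=> h; exists (invmx R *m x); split => //; rewrite mulKVmx.
Qed.

Lemma lat_subW (X W : 'M[F]_2) x : intmx W -> lat (X *m W) x -> lat X x.
Proof. move=> hW [a [ha ->]]; exists (W *m a); split; [exact: intmxM | by rewrite mulmxA]. Qed.

Lemma lat_comb X x y a b : lat X x -> lat X y -> o a -> o b -> lat X (a *: x + b *: y).
Proof.
move=> [p [hp ->]] [q [hq ->]] ha hb; exists (a *: p + b *: q); split.
- by apply: intmxD; apply: intmxZ.
- by rewrite mulmxDr !scalemxAr.
Qed.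

Lemma lat_col X x y : o x -> o y -> lat X (X *m cv2 x y).
Proof. by move=> hx hy; exists (cv2 x y); split => //; apply/intcv2. Qed.

Lemma lat_mulL (P X Y : 'M[F]_2) :
  (forall x, lat X x <-> lat Y x) -> forall x, lat (P *m X) x <-> lat (P *m Y) x.
Proof.
move=> h x; split.
- case=> a [ha ->]; case: (h (X *m a)).1; first by exists a.
  by move=> b [hb e]; exists b; split => //; rewrite -mulmxA e mulmxA.
- case=> a [ha ->]; case: (h (Y *m a)).2; first by exists a.
  by move=> b [hb e]; exists b; split => //; rewrite -mulmxA e mulmxA.
Qed.

Definition GLo (U : 'M[F]_2) := [/\ U \in unitmx, intmx U & intmx (invmx U)].

Lemma lat_GLo X U x : X \in unitmx -> GLo U -> (lat (X *m U) x <-> lat X x).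
Proof.
move=> hX [hU iU iU'].
have hXU : X *m U \in unitmx by rewrite unitmx_mul hX hU.
rewrite (latE _ hXU) (latE _ hX) invmxM // -mulmxA; split => h.
- by rewrite -(mulKVmx hU (invmx X *m x)); apply: intmxM.
- exact: intmxM.
Qed.

Lemma scale_latE l X x : scale_lat l (lat X) x <-> lat (l *: X) x.
Proof.
split.
- by case=> y [a [ha ->]] ->; exists a; split => //; rewrite scalemxAl.
- by case=> a [ha ->]; exists (X *m a); [exists a | rewrite scalemxAl].
Qed.

Definition conj_int (X s : 'M[F]_2) := intmx (invmx X *m s *m X).

Lemma End_latE R s : R \in unitmx -> End_lat (lat R) s <-> conj_int R s.
Proof.
move=> hR; rewrite /conj_int; split.
- move=> h i j.
  have := h (R *m delta_mx j 0) (ex_intro _ (delta_mx j 0) (conj _ erefl)).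
  have hd : intmx (delta_mx j 0 : 'cV[F]_2).
    by move=> k l; rewrite mxE; case: (_ && _); [exact: o1 | exact: o0].
  move=> /(_ hd) /(latE _ hR) /(_ i 0).
  by rewrite !mulmxA -colE mxE.
- move=> h x [a [ha ->]]; exists (invmx R *m s *m R *m a); split.
  + exact: intmxM.
  + by rewrite !mulmxA mulmxV // mul1mx.
Qed.

Lemma inv_eq (A C : 'M[F]_2) : A *m C = 1%:M -> invmx A = C.
Proof.
move=> e; have [hA _] := mulmx1_unit e.
by rewrite -[RHS]mul1mx -(mulVmx hA) -mulmxA e mulmx1.
Qed.

Lemma trZ (l : F) m n (x : 'M[F]_(m, n)) : (l *: x)^T = l *: x^T.
Proof. by apply/matrixP => i j; rewrite !mxE. Qed.

Lemma bformZr (B : 'M[F]_2) (x y : 'cV[F]_2) l : bform B x (l *: y) = l * bform B x y.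
Proof. by rewrite /bform -scalemxAr mxE. Qed.

Lemma bformZl (B : 'M[F]_2) (x y : 'cV[F]_2) l : bform B (l *: x) y = l * bform B x y.
Proof. by rewrite /bform trZ -!scalemxAl mxE. Qed.

Lemma dual_latE (B P : 'M[F]_2) x : B^T = B ->
  dual_lattice v B (lat P) x <-> intmx (P^T *m B *m x).
Proof.
move=> hB.
have e : P^T *m B *m x = (x^T *m B *m P)^T by rewrite !trmx_mul trmxK hB mulmxA.
rewrite e; split.
- move=> h i j.
  have hd : intmx (delta_mx i 0 : 'cV[F]_2).
    by move=> k l; rewrite mxE; case: (_ && _); [exact: o1 | exact: o0].
  have := h (P *m delta_mx i 0) (ex_intro _ (delta_mx i 0) (conj hd erefl)).
  rewrite /bform !mulmxA -colE !mxE (ord1 j) //.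
- move=> h y [a [ha ->]]; rewrite /bform !mulmxA.
  apply: intmxM => //; rewrite -[_ *m P]trmxK; exact: intmx_tr.
Qed.

Definition dualmx (B P : 'M[F]_2) := invmx (P^T *m B).

Lemma dualmx_unit B P : B \in unitmx -> P \in unitmx -> dualmx B P \in unitmx.
Proof. by move=> hB hP; rewrite /dualmx unitmx_inv unitmx_mul unitmx_tr hP. Qed.

Lemma dual_lat (B P : 'M[F]_2) x : B^T = B -> B \in unitmx -> P \in unitmx ->
  dual_lattice v B (lat P) x <-> lat (dualmx B P) x.
Proof.
move=> hB hBu hP; rewrite dual_latE // latE ?dualmx_unit // /dualmx invmxK //.
Qed.

Lemma dualmxK B P : B^T = B -> B \in unitmx -> P \in unitmx -> dualmx B (dualmx B P) = P.
Proof.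
move=> hB hBu hP; rewrite /dualmx trmx_inv trmx_mul hB trmxK.
have hBP : B *m P \in unitmx by rewrite unitmx_mul hBu hP.
by rewrite invmxM ?unitmx_inv // invmxK mulmxA mulVmx // mul1mx.
Qed.

Lemma dual_ext (B : 'M[F]_2) (L L' : 'cV[F]_2 -> Prop) :
  (forall x, L x <-> L' x) -> forall x, dual_lattice v B L x <-> dual_lattice v B L' x.
Proof. by move=> h x; split => hx y /h; apply: hx. Qed.

Lemma End_ext (L L' : 'cV[F]_2 -> Prop) :
  (forall x, L x <-> L' x) -> forall s, End_lat L s <-> End_lat L' s.
Proof. by move=> h s; split => hs x /h /hs /h. Qed.

Lemma order_ext (B : 'M[F]_2) (L L' : 'cV[F]_2 -> Prop) :
  (forall x, L x <-> L' x) -> forall s, order_of v B L s <-> order_of v B L' s.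
Proof.
move=> h s; rewrite /order_of (End_ext h) (End_ext (dual_ext B h)) //.
Qed.

Lemma dual_scale (B : 'M[F]_2) (l : F) (L : 'cV[F]_2 -> Prop) : l != 0 ->
  forall x, dual_lattice v B (scale_lat l L) x <-> scale_lat l^-1 (dual_lattice v B L) x.
Proof.
move=> l0 x; split.
- move=> h; exists (l *: x); last by rewrite scalerA mulVf // scale1r.
  by move=> y hy; rewrite bformZl -bformZr; apply: h; exists y.
- case=> z hz -> y [w hw ->].
  by rewrite bformZr bformZl mulrA mulfV // mul1r; apply: hz.
Qed.

Lemma End_scale (l : F) (L : 'cV[F]_2 -> Prop) s : l != 0 ->
  End_lat (scale_lat l L) s <-> End_lat L s.
Proof.
move=> l0; split.
- move=> h x hx; case: (h (l *: x)); first by exists x.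
  move=> y hy; rewrite -scalemxAr => /(scalerI l0) ->; exact: hy.
- move=> h x [y hy ->]; exists (s *m y); [exact: h | by rewrite scalemxAr].
Qed.

Lemma scale_inv (l : F) (L L' : 'cV[F]_2 -> Prop) : l != 0 ->
  (forall x, L x <-> scale_lat l L' x) -> forall x, L' x <-> scale_lat l^-1 L x.
Proof.
move=> l0 h x; split.
- move=> hx; exists (l *: x); first by apply/h; exists x.
  by rewrite scalerA mulVf // scale1r.
- by case=> y /h [z hz ->] ->; rewrite scalerA mulVf // scale1r.
Qed.

Lemma cv2_ext (x y : 'cV[F]_2) : x 0 0 = y 0 0 -> x 1 0 = y 1 0 -> x = y.
Proof. by move=> h0 h1; rewrite [x]cv2_eta [y]cv2_eta h0 h1. Qed.

Lemma sum_entry n (a : 'I_n -> F) (s : seq 'cV[F]_2) (k : 'I_2) :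
  (\sum_(i < n) a i *: s`_i) k 0 = \sum_(i < n) a i * s`_i k 0.
Proof. by rewrite summxE; apply: eq_bigr => i _; rewrite mxE. Qed.

Lemma lat_sum X n (a : 'I_n -> F) (s : seq 'cV[F]_2) :
  (forall i, o (a i)) -> (forall i : 'I_n, lat X s`_i) -> lat X (\sum_(i < n) a i *: s`_i).
Proof.
move=> ha hs; apply: (big_ind (lat X)).
- by exists 0; split; [move=> i j; rewrite mxE; exact: o0 | rewrite mulmx0].
- by move=> x y hx hy; rewrite -[x]scale1r -[y]scale1r; apply: lat_comb => //; exact: o1.
- move=> i _; have -> : a i *: s`_i = a i *: s`_i + 0 *: s`_i by rewrite scale0r addr0.
  apply: lat_comb; [exact: hs | exact: hs | exact: ha | exact: o0].
Qed.

Lemma lattice_mat (L : 'cV[F]_2 -> Prop) : is_lattice v L ->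
  exists P, P \in unitmx /\ forall x, L x <-> lat P x.
Proof.
case=> s [hL hsp].
have Lc : forall x y a b, L x -> L y -> o a -> o b -> L (a *: x + b *: y).
  move=> x y a b /hL [p [hp ->]] /hL [q [hq ->]] ha hb; apply/hL.
  exists (fun i => a * p i + b * q i); split.
    by move=> i; apply: oD; apply: oM.
  rewrite !scaler_sumr -big_split /=; apply: eq_bigr => i _.
  by rewrite scalerDl !scalerA.
have Ls : forall z, z \in s -> L z.
  move=> z zs; apply/hL.
  have hi : (index z s < size s)%N by rewrite index_mem.
  pose i0 : 'I_(size s) := Ordinal hi.
  exists (fun j => (j == i0)%:R); split.
    by move=> j; case: (_ == _); [exact: o1 | exact: o0].
  rewrite (bigD1 i0) //= eqxx scale1r big1 ?addr0.
    by rewrite nth_index.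
  by move=> j /negbTE ->; rewrite scale0r.
have has1 : has (fun x => x != 0) (map (fun z : 'cV[F]_2 => z 1 0) s).
  apply/negPn/negP => /hasPn hn.
  case: (hsp (cv2 0 1)) => a /(congr1 (fun z : 'cV[F]_2 => z 1 0)).
  rewrite sum_entry (cv2E 0 1).2 big1 => [/eqP|i _]; first by rewrite oner_eq0.
  have := hn _ (map_f (fun z : 'cV[F]_2 => z 1 0) (mem_nth 0 (ltn_ord i))).
  by rewrite negbK => /eqP ->; rewrite mulr0.
case: (exists_pivot has1) => z1 /mapP [g gs ->] hg.
have g0 : g 1 0 != 0 by case: (hg _ (map_f _ gs)).
pose c (y : 'cV[F]_2) := y 1 0 / g 1 0.
have hc : forall y, y \in s -> o (c y) by move=> y ys; case: (hg _ (map_f (fun z : 'cV[F]_2 => z 1 0) ys)).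
pose f2 (y : 'cV[F]_2) := y 0 0 - c y * g 0 0.
have has2 : has (fun x => x != 0) (map f2 s).
  apply/negPn/negP => /hasPn hn.
  case: (hsp (cv2 1 0)) => a e.
  have e0 := congr1 (fun z : 'cV[F]_2 => z 0 0 * g 1 0 - z 1 0 * g 0 0) e.
  move: e0; rewrite /= !sum_entry (cv2E 1 0).1 (cv2E 1 0).2 mul0r subr0 mul1r !mulr_suml -sumrB.
  rewrite big1 => [/eqP|i _]; first by rewrite (negbTE g0).
  have := hn _ (map_f f2 (mem_nth 0 (ltn_ord i))); rewrite negbK /f2 /c => /eqP h.
  have : s`_i 0 0 = s`_i 1 0 / g 1 0 * g 0 0 by apply/eqP; rewrite -subr_eq0 h.
  move=> ->; field; by rewrite ?g0.
case: (exists_pivot has2) => z2 /mapP [hk hks ->] hh.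
have h0 : f2 hk != 0 by case: (hh _ (map_f _ hks)).
pose P := mx22 (f2 hk) (g 0 0) 0 (g 1 0).
have hP : P \in unitmx.
  have e : P *m mx22 (f2 hk)^-1 (- (g 0 0 / (f2 hk * g 1 0))) 0 (g 1 0)^-1 = 1%:M.
    rewrite mx22_1 mulmx22; congr mx22; field; by rewrite ?mulf_neq0 ?h0 ?g0.
  by case: (mulmx1_unit e).
exists P; split => //.
move=> x; split.
- move=> /hL [a [ha ->]]; apply: lat_sum => // i.
  have si := mem_nth 0 (ltn_ord i).
  have -> : s`_i = P *m cv2 (f2 s`_i / f2 hk) (c s`_i).
    rewrite /P mulmx22v {1}[s`_i]cv2_eta; congr cv2.
      by rewrite mulrC divfK // /f2; ring.
    by rewrite mul0r add0r /c mulrC divfK.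
  apply: lat_col; last exact: hc.
  by case: (hh _ (map_f f2 si)).
- case=> a [ha ->]; rewrite [a]cv2_eta mulmx22v.
  have -> : cv2 (f2 hk * a 0 0 + g 0 0 * a 1 0) (0 * a 0 0 + g 1 0 * a 1 0)
          = a 0 0 *: (1 *: hk + (- c hk) *: g) + a 1 0 *: g.
    apply: cv2_ext; rewrite !mxE /= /f2 /c; field; by rewrite ?g0.
  apply: (Lc); [apply: (Lc) | exact: Ls gs | exact: ha 0 0 | exact: ha 1 0].
  + exact: Ls hks.
  + exact: Ls gs.
  + exact: o1.
  + exact/oN/hc/hks.
Qed.

Lemma GLoM U W : GLo U -> GLo W -> GLo (U *m W).
Proof.
case=> hU iU iU' [hW iW iW']; split.
- by rewrite unitmx_mul hU hW.
- exact: intmxM.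
- by rewrite invmxM //; exact: intmxM.
Qed.

Lemma GLo22 a b c d a' b' c' d' :
  mx22 a b c d *m mx22 a' b' c' d' = 1%:M ->
  intmx (mx22 a b c d) -> intmx (mx22 a' b' c' d') -> GLo (mx22 a b c d).
Proof.
move=> e i1 i2; split; [by case: (mulmx1_unit e) | exact: i1 | by rewrite (inv_eq e)].
Qed.

Definition Jm := mx22 0 1 1 0.

Lemma JJ : Jm *m Jm = 1%:M.
Proof. by rewrite /Jm mulmx22 mx22_1; congr mx22; ring. Qed.

Lemma GLoJ : GLo Jm.
Proof.
apply: (GLo22 JJ); apply/intmx22; split; (exact: o0 || exact: o1).
Qed.

Definition smith_concl (M : 'M[F]_2) := exists U d1 d2 W,
  [/\ GLo U, GLo W, M = U *m mx22 d1 0 0 d2 *m W & [/\ d1 != 0, d2 != 0 & o (d2 / d1)]].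

Lemma unit_nz a b c d : mx22 a b c d \in unitmx -> d = 0 -> b = 0 -> False.
Proof.
move=> hu d0 b0; have := mulVmx hu; rewrite [invmx _]mx22_eta mulmx22 mx22_1 d0 b0.
by case/mx22_inj => _ _ _ /eqP; rewrite !mulr0 addr0 eq_sym oner_eq0.
Qed.

Lemma smith_core a b c d : a != 0 -> o (b / a) -> o (c / a) -> o (d / a) ->
  mx22 a b c d \in unitmx -> smith_concl (mx22 a b c d).
Proof.
move=> a0 hb hc hd hu.
pose del := d - c * b / a.
have eM : mx22 a b c d = mx22 1 0 (c / a) 1 *m mx22 a 0 0 del *m mx22 1 (b / a) 0 1.
  rewrite !mulmx22 /del; congr mx22; field; exact: a0.
have GU : GLo (mx22 1 0 (c / a) 1).
  apply: (@GLo22 _ _ _ _ 1 0 (- (c / a)) 1).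
  - rewrite mulmx22 mx22_1; congr mx22; ring.
  - apply/intmx22; split; (exact: o0 || exact: o1 || exact: hc).
  - apply/intmx22; split; (exact: o0 || exact: o1 || exact: oN).
have GW : GLo (mx22 1 (b / a) 0 1).
  apply: (@GLo22 _ _ _ _ 1 (- (b / a)) 0 1).
  - rewrite mulmx22 mx22_1; congr mx22; ring.
  - apply/intmx22; split; (exact: o0 || exact: o1 || exact: hb).
  - apply/intmx22; split; (exact: o0 || exact: o1 || exact: oN).
have del0 : del != 0.
  apply/negP => /eqP del0.
  have hD : mx22 a 0 0 del \in unitmx.
    have -> : mx22 a 0 0 del = invmx (mx22 1 0 (c / a) 1) *m mx22 a b c d *m invmx (mx22 1 (b / a) 0 1).
      by rewrite eM !mulmxA mulVmx ?mul1mx -?mulmxA ?mulmxV ?mulmx1 //; [case: GW | case: GU].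
    case: GU => hU _ _; case: GW => hW _ _.
    by rewrite !unitmx_mul !unitmx_inv hU hW hu.
  exact: (unit_nz hD del0).
exists (mx22 1 0 (c / a) 1), a, del, (mx22 1 (b / a) 0 1); split => //; split => //.
have -> : del / a = d / a - (c / a) * (b / a) by rewrite /del; field; exact: a0.
by apply: oB => //; apply: oM.
Qed.

Lemma smith_swap M : smith_concl M -> smith_concl (Jm *m M) /\ smith_concl (M *m Jm).
Proof.
case=> U [d1 [d2 [W [GU GW e hd]]]]; split.
- exists (Jm *m U), d1, d2, W; split => //; first exact: GLoM GLoJ GU.
  by rewrite e !mulmxA.
- exists U, d1, d2, (W *m Jm); split => //; first exact: GLoM GW GLoJ.
  by rewrite e !mulmxA.
Qed.

Lemma smith M : M \in unitmx -> smith_concl M.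
Proof.
move=> hM.
have hs : has (fun x => x != 0) [:: M 0 0; M 0 1; M 1 0; M 1 1].
  apply/negPn/negP => /hasPn hn.
  have z11 : M 1 1 = 0 by apply/eqP; rewrite -[_ == _]negbK; apply: hn; rewrite !inE eqxx ?orbT.
  have z01 : M 0 1 = 0 by apply/eqP; rewrite -[_ == _]negbK; apply: hn; rewrite !inE eqxx ?orbT.
  move: hM; rewrite [M]mx22_eta => hu; exact: (unit_nz hu z11 z01).
have JK : forall N : 'M[F]_2, Jm *m (Jm *m N) = N by move=> N; rewrite mulmxA JJ mul1mx.
have KJ : forall N : 'M[F]_2, N *m Jm *m Jm = N by move=> N; rewrite -mulmxA JJ mulmx1.
case: (exists_pivot hs) => z; rewrite !inE => hz hdv.
have D : forall y, y \in [:: M 0 0; M 0 1; M 1 0; M 1 1] -> o (y / z) by move=> y /hdv [].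
have z0 : z != 0 by case: (hdv z); rewrite ?inE ?eqxx ?orbT //; case/or4P: hz => /eqP ->; rewrite !inE eqxx ?orbT.
have d00 : o (M 0 0 / z) by apply: D; rewrite !inE eqxx ?orbT.
have d01 : o (M 0 1 / z) by apply: D; rewrite !inE eqxx ?orbT.
have d10 : o (M 1 0 / z) by apply: D; rewrite !inE eqxx ?orbT.
have d11 : o (M 1 1 / z) by apply: D; rewrite !inE eqxx ?orbT.
case/or4P: hz => /eqP ez; subst z.
- by rewrite [M]mx22_eta; apply: smith_core; rewrite -?mx22_eta.
- have hJ : M *m Jm \in unitmx by rewrite unitmx_mul hM; case: GLoJ.
  have : smith_concl (M *m Jm).
    move: hJ; rewrite [M]mx22_eta /Jm mulmx22 => hJ.
    apply: smith_core => //; rewrite ?mul0r ?mulr0 ?add0r ?addr0 ?mulr1 //.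
  by case/smith_swap => _; rewrite KJ.
- have hJ : Jm *m M \in unitmx by rewrite unitmx_mul hM andbT; case: GLoJ.
  have : smith_concl (Jm *m M).
    move: hJ; rewrite [M]mx22_eta /Jm mulmx22 => hJ.
    apply: smith_core => //; rewrite ?mul0r ?mulr0 ?add0r ?addr0 ?mul1r //.
  by case/smith_swap; rewrite JK.
- have hJ : Jm *m M *m Jm \in unitmx by rewrite !unitmx_mul hM andbT; case: GLoJ => ->.
  have : smith_concl (Jm *m M *m Jm).
    move: hJ; rewrite [M]mx22_eta /Jm !mulmx22 => hJ.
    apply: smith_core => //; rewrite ?mul0r ?mulr0 ?add0r ?addr0 ?mul1r ?mulr1 //.
  case/smith_swap => _; rewrite KJ; case/smith_swap; rewrite JK //.
Qed.

Lemma unit_row0 a b c d : mx22 a b c d \in unitmx -> a = 0 -> b = 0 -> False.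
Proof.
move=> hu a0 b0; have := mulmxV hu; rewrite [invmx _]mx22_eta mulmx22 mx22_1 a0 b0.
by case/mx22_inj => /eqP; rewrite !mul0r addr0 eq_sym oner_eq0.
Qed.

Lemma unit_row1 a b c d : mx22 a b c d \in unitmx -> c = 0 -> d = 0 -> False.
Proof.
move=> hu c0 d0; have := mulmxV hu; rewrite [invmx _]mx22_eta mulmx22 mx22_1 c0 d0.
by case/mx22_inj => _ _ _ /eqP; rewrite !mul0r addr0 eq_sym oner_eq0.
Qed.

Lemma diag_unit a d : a != 0 -> d != 0 -> mx22 a 0 0 d \in unitmx.
Proof.
move=> a0 d0; have e : mx22 a 0 0 d *m mx22 a^-1 0 0 d^-1 = 1%:M.
  by rewrite mulmx22 mx22_1; congr mx22; field; rewrite ?a0 ?d0.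
by case: (mulmx1_unit e).
Qed.

Lemma conj_mulP (P Y s' : 'M[F]_2) : P \in unitmx -> Y \in unitmx ->
  conj_int (P *m Y) (P *m s' *m invmx P) <-> conj_int Y s'.
Proof.
move=> hP hY; rewrite /conj_int invmxM //.
have -> : invmx Y *m invmx P *m (P *m s' *m invmx P) *m (P *m Y) = invmx Y *m s' *m Y.
  by rewrite !mulmxA -(mulmxA _ (invmx P) P) mulVmx // mulmx1 -(mulmxA _ (invmx P) P) mulVmx // mulmx1.
by [].
Qed.

Lemma conj_one (s : 'M[F]_2) : conj_int 1%:M s <-> intmx s.
Proof. by rewrite /conj_int invmx1 mul1mx mulmx1. Qed.

Lemma conj_diag a d p q r w : a != 0 -> d != 0 ->
  conj_int (mx22 a 0 0 d) (mx22 p q r w) <-> [/\ o p, o (q * d / a), o (r * a / d) & o w].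
Proof.
move=> a0 d0; rewrite /conj_int.
have e : mx22 a 0 0 d *m mx22 a^-1 0 0 d^-1 = 1%:M.
  by rewrite mulmx22 mx22_1; congr mx22; field; rewrite ?a0 ?d0.
rewrite (inv_eq e) !mulmx22.
have -> : mx22 ((a^-1 * p + 0 * r) * a + (a^-1 * q + 0 * w) * 0)
    ((a^-1 * p + 0 * r) * 0 + (a^-1 * q + 0 * w) * d)
    ((0 * p + d^-1 * r) * a + (0 * q + d^-1 * w) * 0)
    ((0 * p + d^-1 * r) * 0 + (0 * q + d^-1 * w) * d) = mx22 p (q * d / a) (r * a / d) w.
  congr mx22; field; rewrite ?a0 ?d0 //.
exact: intmx22.
Qed.

Lemma conj_lat (X Y s : 'M[F]_2) : X \in unitmx -> Y \in unitmx ->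
  (forall x, lat X x <-> lat Y x) -> (conj_int X s <-> conj_int Y s).
Proof. by move=> hX hY h; rewrite -End_latE // -End_latE // (End_ext h). Qed.

Lemma scale_ext (l : F) (L L' : 'cV[F]_2 -> Prop) :
  (forall x, L x <-> L' x) -> forall x, scale_lat l L x <-> scale_lat l L' x.
Proof. by move=> h x; split; case=> y /h hy ->; exists y. Qed.

Lemma diag_stable (P R : 'M[F]_2) d1 d2 : P \in unitmx -> R \in unitmx ->
  d1 != 0 -> d2 != 0 -> o (d2 / d1) ->
  (forall s, conj_int P s -> conj_int (P *m mx22 d1 0 0 d2) s -> conj_int R s) ->
  exists a t, [/\ a != 0, t != 0, o t &
    forall x, lat R x <-> lat (P *m mx22 a 0 0 (a * t)) x].
Proof.
move=> hP hR d10 d20 hd H.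
pose K := invmx P *m R.
have hK : K \in unitmx by rewrite unitmx_mul unitmx_inv hP hR.
have eR : R = P *m K by rewrite /K mulKVmx.
have HK : forall s', intmx s' -> conj_int (mx22 d1 0 0 d2) s' -> End_lat (lat K) s'.
  move=> s' i1 i2; apply/End_latE => //.
  have hD := diag_unit d10 d20.
  have := H (P *m s' *m invmx P); rewrite eR conj_mulP //.
  rewrite -{1}[P]mulmx1 !conj_mulP ?unitmx1 // conj_one.
  by apply.
have E11 : End_lat (lat K) (mx22 1 0 0 0).
  apply: (HK); first by apply/intmx22; split; (exact: o0 || exact: o1).
  by apply/conj_diag => //; split; rewrite ?mul0r; (exact: o0 || exact: o1).
have E22 : End_lat (lat K) (mx22 0 0 0 1).
  apply: (HK); first by apply/intmx22; split; (exact: o0 || exact: o1).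
  by apply/conj_diag => //; split; rewrite ?mul0r; (exact: o0 || exact: o1).
have E12 : End_lat (lat K) (mx22 0 1 0 0).
  apply: (HK); first by apply/intmx22; split; (exact: o0 || exact: o1).
  by apply/conj_diag => //; split; rewrite ?mul0r ?mul1r; (exact: o0 || exact: o1 || exact: hd).
have eK := mx22_eta K.
have col1 : K *m cv2 1 0 = cv2 (K 0 0) (K 1 0).
  by rewrite {1}eK mulmx22v; congr cv2; ring.
have col2 : K *m cv2 0 1 = cv2 (K 0 1) (K 1 1).
  by rewrite {1}eK mulmx22v; congr cv2; ring.
have p1 : forall x y, mx22 1 0 0 0 *m cv2 x y = cv2 x 0.
  by move=> x y; rewrite mulmx22v; congr cv2; ring.
have p2 : forall x y, mx22 0 0 0 1 *m cv2 x y = cv2 0 y.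
  by move=> x y; rewrite mulmx22v; congr cv2; ring.
have c1 : lat K (cv2 (K 0 0) 0) /\ lat K (cv2 0 (K 1 0)).
  have hc : lat K (K *m cv2 1 0) by apply: lat_col; [exact: o1 | exact: o0].
  rewrite col1 in hc; split.
  - by have := E11 _ hc; rewrite p1.
  - by have := E22 _ hc; rewrite p2.
have c2 : lat K (cv2 (K 0 1) 0) /\ lat K (cv2 0 (K 1 1)).
  have hc : lat K (K *m cv2 0 1) by apply: lat_col; [exact: o0 | exact: o1].
  rewrite col2 in hc; split.
  - by have := E11 _ hc; rewrite p1.
  - by have := E22 _ hc; rewrite p2.
have hs1 : has (fun x => x != 0) [:: K 0 0; K 0 1].
  apply/negPn/negP => /hasPn hn.
  have z0 : K 0 0 = 0 by apply/eqP; rewrite -[_ == _]negbK; apply: hn; rewrite !inE eqxx ?orbT.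
  have z1 : K 0 1 = 0 by apply/eqP; rewrite -[_ == _]negbK; apply: hn; rewrite !inE eqxx ?orbT.
  by move: hK; rewrite eK => hu; apply: (unit_row0 hu).
have hs2 : has (fun x => x != 0) [:: K 1 0; K 1 1].
  apply/negPn/negP => /hasPn hn.
  have z0 : K 1 0 = 0 by apply/eqP; rewrite -[_ == _]negbK; apply: hn; rewrite !inE eqxx ?orbT.
  have z1 : K 1 1 = 0 by apply/eqP; rewrite -[_ == _]negbK; apply: hn; rewrite !inE eqxx ?orbT.
  by move: hK; rewrite eK => hu; apply: (unit_row1 hu).
case: (exists_pivot hs1) => al hal Hal.
case: (exists_pivot hs2) => be hbe Hbe.
have al0 : al != 0 by case: (Hal al hal).
have be0 : be != 0 by case: (Hbe be hbe).
have lal : lat K (cv2 al 0).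
  by move: hal; rewrite !inE => /orP [] /eqP ->; [case: c1 | case: c2].
have lbe : lat K (cv2 0 be).
  by move: hbe; rewrite !inE => /orP [] /eqP ->; [case: c1 | case: c2].
pose Dl := mx22 al 0 0 be.
have hDl : Dl \in unitmx by apply: diag_unit.
have eqK : forall x, lat K x <-> lat Dl x.
  move=> x; split.
  - have -> : K = Dl *m mx22 (K 0 0 / al) (K 0 1 / al) (K 1 0 / be) (K 1 1 / be).
      by rewrite {1}eK mulmx22; congr mx22; field; rewrite ?al0 ?be0.
    apply: lat_subW; apply/intmx22; split.
    + by case: (Hal (K 0 0)); rewrite ?inE ?eqxx.
    + by case: (Hal (K 0 1)); rewrite ?inE ?eqxx ?orbT.
    + by case: (Hbe (K 1 0)); rewrite ?inE ?eqxx.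
    + by case: (Hbe (K 1 1)); rewrite ?inE ?eqxx ?orbT.
  - case=> a [ha ->]; rewrite [a]cv2_eta mulmx22v.
    have -> : cv2 (al * a 0 0 + 0 * a 1 0) (0 * a 0 0 + be * a 1 0)
        = a 0 0 *: cv2 al 0 + a 1 0 *: cv2 0 be.
      by rewrite !scalecv2 addcv2; congr cv2; ring.
    by apply: lat_comb; [exact: lal | exact: lbe | exact: ha 0 0 | exact: ha 1 0].
have ht : o (be / al).
  have := E12; rewrite End_latE // (conj_lat _ hK hDl eqK) conj_diag //.
  by case=> _; rewrite mul1r.
exists al, (be / al); split => //; first by rewrite mulf_neq0 ?invr_eq0.
rewrite mulrC divfK // eR; exact: lat_mulL.
Qed.

Lemma order_mat (B P : 'M[F]_2) (L : 'cV[F]_2 -> Prop) s :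
  B^T = B -> B \in unitmx -> P \in unitmx -> (forall x, L x <-> lat P x) ->
  order_of v B L s <-> conj_int P s /\ conj_int (dualmx B P) s.
Proof.
move=> hB hBu hP hL; rewrite (order_ext B hL) /order_of End_latE //.
rewrite (End_ext (fun x => dual_lat x hB hBu hP)) End_latE ?dualmx_unit //.
Qed.

Lemma main (dag : 'M[F]_2 -> 'M[F]_2) (B : 'M[F]_2)
    (hdag : orth_involution_with_form dag B)
    (L1 L2 : 'cV[F]_2 -> Prop) (h1 : is_lattice v L1) (h2 : is_lattice v L2) :
  (forall s, order_of v B L1 s <-> order_of v B L2 s) <->
  exists l : F, l != 0 /\
    ((forall x, L1 x <-> scale_lat l L2 x) \/
     (forall x, L1 x <-> scale_lat l (dual_lattice v B L2) x)).
Proof.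
case: hdag => _ _ _ [hB hBu] _.
case: (lattice_mat h1) => P1 [hP1 e1].
case: (lattice_mat h2) => P2 [hP2 e2].
pose Q1 := dualmx B P1; pose Q2 := dualmx B P2.
have hQ1 : Q1 \in unitmx by apply: dualmx_unit.
have hQ2 : Q2 \in unitmx by apply: dualmx_unit.
have d2 : forall x, dual_lattice v B L2 x <-> lat Q2 x.
  by move=> x; rewrite (dual_ext B e2) dual_lat.
have dd2 : forall x, dual_lattice v B (dual_lattice v B L2) x <-> L2 x.
  by move=> x; rewrite (dual_ext B d2) dual_lat // dualmxK // e2.
split.
- move=> hO.
  have O1 : forall s, order_of v B L1 s <-> conj_int P1 s /\ conj_int Q1 s.
    by move=> s; apply: order_mat.
  have O2 : forall s, order_of v B L2 s <-> conj_int P2 s /\ conj_int Q2 s.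
    by move=> s; apply: order_mat.
  have hM : invmx P1 *m Q1 \in unitmx by rewrite unitmx_mul unitmx_inv hP1 hQ1.
  case: (smith hM) => U [d1 [dd [W [GU GW eM [d10 dd0 hd]]]]].
  pose P := P1 *m U; pose D := mx22 d1 0 0 dd.
  have hU : U \in unitmx by case: GU.
  have hW : W \in unitmx by case: GW.
  have hP : P \in unitmx by rewrite unitmx_mul hP1 hU.
  have hD : D \in unitmx by apply: diag_unit.
  have hPD : P *m D \in unitmx by rewrite unitmx_mul hP hD.
  have eP : forall x, lat P1 x <-> lat P x by move=> x; rewrite lat_GLo.
  have eQ : forall x, lat Q1 x <-> lat (P *m D) x.
    move=> x; have -> : Q1 = P *m D *m W by rewrite -[Q1](mulKVmx hP1) eM /P /D !mulmxA.
    exact: lat_GLo.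
  have O1' : forall s, order_of v B L1 s <-> conj_int P s /\ conj_int (P *m D) s.
    by move=> s; rewrite O1 (conj_lat _ hP1 hP eP) (conj_lat _ hQ1 hPD eQ).
  have S2 : forall s, conj_int P s -> conj_int (P *m D) s -> conj_int P2 s /\ conj_int Q2 s.
    by move=> s c1 c2; apply/O2/hO/O1'.
  case: (diag_stable hP hP2 d10 dd0 hd (fun s c1 c2 => (S2 s c1 c2).1)) => al [t [al0 t0 ht eL2]].
  case: (diag_stable hP hQ2 d10 dd0 hd (fun s c1 c2 => (S2 s c1 c2).2)) => be [u [be0 u0 hu eQ2]].
  have hPt : P *m mx22 al 0 0 (al * t) \in unitmx by rewrite unitmx_mul hP diag_unit ?mulf_neq0.
  have hPu : P *m mx22 be 0 0 (be * u) \in unitmx by rewrite unitmx_mul hP diag_unit ?mulf_neq0.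
  have O2' : forall s, order_of v B L2 s <->
      conj_int (P *m mx22 al 0 0 (al * t)) s /\ conj_int (P *m mx22 be 0 0 (be * u)) s.
    by move=> s; rewrite O2 (conj_lat _ hP2 hPt eL2) (conj_lat _ hQ2 hPu eQ2).
  have test : forall w, w != 0 -> o (w^-1 * (al * t) / al) -> o (w^-1 * (be * u) / be) -> o w^-1.
    move=> w w0 h1' h2'.
    have hs : order_of v B L2 (P *m mx22 0 w^-1 0 0 *m invmx P).
      apply/O2'; rewrite !conj_mulP ?diag_unit ?mulf_neq0 //.
      split; apply/conj_diag; rewrite ?mulf_neq0 //; split; rewrite ?mul0r;
        (exact: o0 || done).
    move/hO/O1': hs => [+ _]; rewrite -{1}[P]mulmx1 conj_mulP ?unitmx1 // conj_one.
    by case/intmx22.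
  have GLd : forall w, o w -> o w^-1 -> w != 0 -> GLo (mx22 1 0 0 w).
    move=> w hw hw' w0; apply: (@GLo22 _ _ _ _ 1 0 0 w^-1).
    - by rewrite mulmx22 mx22_1; congr mx22; field.
    - by apply/intmx22; split; (exact: o0 || exact: o1 || exact: hw).
    - by apply/intmx22; split; (exact: o0 || exact: o1 || exact: hw').
  have escale : forall a w, P *m mx22 a 0 0 (a * w) = (a *: P) *m mx22 1 0 0 w.
    move=> a w; rewrite -scalemxAl scalemxAr scalemx22 mulr1 !mulr0 //.
  have hPa : forall a, a != 0 -> a *: P \in unitmx.
    move=> a a0.
    have -> : a *: P = P *m mx22 a 0 0 a.
      have -> : mx22 a 0 0 a = a *: 1%:M by rewrite mx22_1 scalemx22 mulr1 mulr0.
      by rewrite -scalemxAr mulmx1.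
    by rewrite unitmx_mul hP diag_unit.
  case: (dv_tot t0 u0) => hut.
  +
    have ti : o t^-1.
      apply: (test t t0).
        have -> : t^-1 * (al * t) / al = 1 by field; rewrite ?al0 ?t0.
        exact: o1.
      have -> : t^-1 * (be * u) / be = u / t by field; rewrite ?be0 ?t0.
      done.
    exists al^-1; split; first by rewrite invr_eq0.
    left; apply: scale_inv; first by [].
    move=> x; rewrite e2 eL2 escale (lat_GLo _ (hPa al al0) (GLd t ht ti t0)).
    apply: iff_trans; first exact: iff_sym (scale_latE al P x).
    by apply: scale_ext => y; rewrite e1 eP; split.
  + have ui : o u^-1.
      apply: (test u u0).
        have -> : u^-1 * (al * t) / al = t / u by field; rewrite ?al0 ?u0.
        done.
      have -> : u^-1 * (be * u) / be = 1 by field; rewrite ?be0 ?u0.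
      exact: o1.
    exists be^-1; split; first by rewrite invr_eq0.
    right; apply: scale_inv; first by [].
    move=> x; rewrite d2 eQ2 escale (lat_GLo _ (hPa be be0) (GLd u hu ui u0)).
    apply: iff_trans; first exact: iff_sym (scale_latE be P x).
    by apply: scale_ext => y; rewrite e1 eP; split.
- case=> l [l0 [hl|hl]] s.
  + rewrite (order_ext B hl) /order_of End_scale //.
    by rewrite (End_ext (dual_scale B L2 l0)) End_scale ?invr_eq0.
  + rewrite (order_ext B hl) /order_of End_scale //.
    rewrite (End_ext (dual_scale B _ l0)) End_scale ?invr_eq0 //.
    by rewrite (End_ext dd2); split => -[].
Qed.
End Val.

Unset Implicit Arguments.

Theorem corollary8p3 (F : fieldType) (v : F -> int)
    (hF : is_nonarch_local_field v) (hchar : (2%:R : F) != 0)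
    (dag : 'M[F]_2 -> 'M[F]_2) (B : 'M[F]_2)
    (hdag : orth_involution_with_form dag B)
    (L1 L2 : 'cV[F]_2 -> Prop) (h1 : is_lattice v L1) (h2 : is_lattice v L2) :
  (forall s, order_of v B L1 s <-> order_of v B L2 s) <->
  exists l : F, l != 0 /\
    ((forall x, L1 x <-> scale_lat l L2 x) \/
     (forall x, L1 x <-> scale_lat l (dual_lattice v B L2) x)).
Proof. exact: (main hF hdag h1 h2). Qed.
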